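(* In the second toy theory described in the context, fix any initial (pure or mixed) state and any finite sequence $Y_1,\dots,Y_m$ of Bob's measurements ($Y_k\in\{B_1,B_2\}$). Consider any finite sequence of Alice's measurements (each in $\{A_1,A_2\}$, possibly empty) and any interleaving of it with $Y_1,\dots,Y_m$ into a single sequence of measurements performed one after another. Then the joint probability distribution of the outcomes of $Y_1,\dots,Y_m$ does not depend on Alice's sequence or on the interleaving (in particular it equals the distribution obtained when Alice performs no measurement). The same holds with the roles of Alice and Bob exchanged.
   Context: Second toy theory. Let $V=\{\emptyset,-,+,\ominus,\oplus\}$ be the set of hidden values. A pure state is a quadruple $a_1^{v_1}a_2^{v_2}b_1^{v_3}b_2^{v_4}$ with $v_1,\dots,v_4\in V$, where $v_1,v_2,v_3,v_4$ are the hidden values of the observables $A_1,A_2,B_1,B_2$ respectively. A hidden value $\emptyset$ is called undetermined, $-$ and $+$ are potential values $-1$ and $+1$, and $\ominus,\oplus$ are actual values $-1$ and $+1$. A mixed state is a probability distribution over pure states; measurements act on mixed states by linearity (first sample a pure state, then apply the rules below). $A_1,A_2$ are Alice's observables, $B_1,B_2$ are Bob's; for $X$ one of them, the other observable of the same party is called its partner. Measuring a $\pm1$-valued observable $X$ on a pure state: (1) Outcome: if the hidden value of $X$ is $\emptyset$, the outcome is $\pm1$ with probability $1/2$ each; if it is $+$ or $\oplus$ the outcome is $+1$ with certainty; if it is $-$ or $\ominus$ the outcome is $-1$ with certainty. (2) Post-measurement state when the pre-measurement state is not $a_1^\emptyset a_2^\emptyset b_1^\emptyset b_2^\emptyset$: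 the hidden value of $X$ becomes the actual value of the outcome ($\oplus$ for $+1$, $\ominus$ for $-1$); if the partner of $X$ has a potential value ($+$ or $-$), this potential value flips sign with probability $1/2$ (independently), otherwise it is unchanged; the hidden values of the other party's two observables are unchanged. (3) Post-measurement state when the pre-measurement state is $a_1^\emptyset a_2^\emptyset b_1^\emptyset b_2^\emptyset$ (each outcome having probability $1/2$): measuring $A_1$ gives $a_1^\ominus a_2^\emptyset b_1^- b_2^-$ on outcome $-1$ and $a_1^\oplus a_2^\emptyset b_1^+ b_2^+$ on outcome $+1$; measuring $A_2$ gives $a_1^\emptyset a_2^\ominus b_1^- b_2^+$ on $-1$ and $a_1^\emptyset a_2^\oplus b_1^+ b_2^-$ on $+1$; measuring $B_1$ gives $a_1^- a_2^- b_1^\ominus b_2^\emptyset$ on $-1$ and $a_1^+ a_2^+ b_1^\oplus b_2^\emptyset$ on $+1$; measuring $B_2$ gives $a_1^- a_2^+ b_1^\emptyset b_2^\ominus$ on $-1$ and $a_1^+ a_2^- b_1^\emptyset b_2^\oplus$ on $+1$. *)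

(* Defs.v *)
From HB Require Import structures.
From mathcomp Require Import all_boot all_order all_algebra.
Set Implicit Arguments. Unset Strict Implicit. Unset Printing Implicit Defensive.
Import Order.TTheory GRing.Theory Num.Theory.
Local Open Scope ring_scope.

(* hidden values: undetermined, potential -1/+1, actual -1/+1 *)
Inductive hval := Und | PotM | PotP | ActM | ActP.
Inductive obs := A1 | A2 | B1 | B2.
Inductive party := Alice | Bob.

Definition owner (o : obs) : party :=
  match o with A1 | A2 => Alice | B1 | B2 => Bob end.
Definition partner (o : obs) : obs :=
  match o with A1 => A2 | A2 => A1 | B1 => B2 | B2 => B1 end.
Definition party_eqb (p q : party) : bool :=
  match p, q with Alice, Alice | Bob, Bob => true | _, _ => false end.
Definition obs_eqb (p q : obs) : bool :=
  match p, q with A1, A1 | A2, A2 | B1, B1 | B2, B2 => true | _, _ => false end.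

Definition pstate := obs -> hval.
Definition mk (v1 v2 v3 v4 : hval) : pstate :=
  fun o => match o with A1 => v1 | A2 => v2 | B1 => v3 | B2 => v4 end.
Definition is_und (v : hval) : bool := if v is Und then true else false.
Definition is_blank (s : pstate) : bool :=
  [&& is_und (s A1), is_und (s A2), is_und (s B1) & is_und (s B2)].
Definition upd (s : pstate) (X : obs) (v : hval) : pstate :=
  fun o => if obs_eqb o X then v else s o.

(* outcomes: true = +1, false = -1 *)
Definition actual (b : bool) : hval := if b then ActP else ActM.
Definition pot (b : bool) : hval := if b then PotP else PotM.

Definition blank_post (X : obs) (b : bool) : pstate :=
  match X with
  | A1 => mk (actual b) Und (pot b) (pot b)
  | A2 => mk Und (actual b) (pot b) (pot (~~ b))
  | B1 => mk (pot b) (pot b) (actual b) Und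
  | B2 => mk (pot b) (pot (~~ b)) Und (actual b)
  end.

Section Semantics.
Variable R : numFieldType.

Definition outcome_dist (v : hval) : seq (R * bool) :=
  match v with
  | Und => [:: (2^-1, false); (2^-1, true)]
  | PotP | ActP => [:: (1, true)]
  | PotM | ActM => [:: (1, false)]
  end.

(* rule (2): a potential value of the partner flips with probability 1/2 *)
Definition partner_dist (v : hval) : seq (R * hval) :=
  match v with
  | PotP => [:: (2^-1, PotP); (2^-1, PotM)]
  | PotM => [:: (2^-1, PotM); (2^-1, PotP)]
  | _ => [:: (1, v)]
  end.

Definition measure (s : pstate) (X : obs) : seq (R * (bool * pstate)) :=
  if is_blank s then
    [:: (2^-1, (false, blank_post X false)); (2^-1, (true, blank_post X true))]
  else
    flatten [seq [seq (p.1 * q.1,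
                       (p.2, upd (upd s X (actual p.2)) (partner X) q.2))
                 | q <- partner_dist (s (partner X))]
            | p <- outcome_dist (s X)].

Fixpoint run (s : pstate) (xs : seq obs) : seq (R * (seq bool * pstate)) :=
  match xs with
  | [::] => [:: (1, ([::], s))]
  | X :: xs' =>
      flatten [seq [seq (b.1 * r.1, (b.2.1 :: r.2.1, r.2.2)) | r <- run b.2.2 xs']
              | b <- measure s X]
  end.

(* mixed state = finitely supported distribution, given as a weighted list;
   measurements act by linearity *)
Definition run_mixed (mu : seq (R * pstate)) (xs : seq obs) : seq (R * seq bool) :=
  flatten [seq [seq (w.1 * r.1, r.2.1) | r <- run w.2 xs] | w <- mu].

Definition is_mixed_state (mu : seq (R * pstate)) : Prop :=
  all (fun w => 0 <= w.1) mu /\ \sum_(w <- mu) w.1 = 1.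

Definition select (P : party) (xs : seq obs) (outs : seq bool) : seq bool :=
  [seq p.2 | p <- zip xs outs & party_eqb (owner p.1) P].

Definition marg_prob (mu : seq (R * pstate)) (xs : seq obs) (P : party)
    (o : seq bool) : R :=
  \sum_(r <- run_mixed mu xs | select P xs r.2 == o) r.1.

Definition joint_prob (mu : seq (R * pstate)) (ys : seq obs) (o : seq bool) : R :=
  \sum_(r <- run_mixed mu ys | r.2 == o) r.1.

End Semantics.

(* Main.v *)
Require Import Defs.
From HB Require Import structures.
From mathcomp Require Import all_boot all_order all_algebra.
From mathcomp Require Import ring.
Import Order.TTheory GRing.Theory Num.Theory.
Local Open Scope ring_scope.

Section S.
Variable R : realFieldType.

Lemma hh : 2^-1 + 2^-1 = 1 :> R.
Proof. by field. Qed.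

Definition G (s : pstate) ys o : R := \sum_(r <- run R s ys | r.2.1 == o) r.1.

Lemma runE s x xs : run R s (x :: xs) =
  flatten [seq [seq (b.1 * r.1, (b.2.1 :: r.2.1, r.2.2)) | r <- run R b.2.2 xs]
              | b <- measure R s x].
Proof. by []. Qed.

Lemma run_cons_sum s x xs (Q : seq bool -> bool) :
  \sum_(r <- run R s (x::xs) | Q r.2.1) r.1 =
  \sum_(b <- measure R s x) b.1 * \sum_(r <- run R b.2.2 xs | Q (b.2.1 :: r.2.1)) r.1.
Proof.
rewrite runE big_flatten /= big_map; apply: eq_bigr => b _.
by rewrite big_map mulr_sumr.
Qed.

Lemma sum_cons_eq (L : seq (R * (seq bool * pstate))) (f : seq bool -> seq bool) c o :
  \sum_(r <- L | c :: f r.2.1 == o) r.1 =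
  match o with [::] => 0 | c' :: o' =>
    if c == c' then \sum_(r <- L | f r.2.1 == o') r.1 else 0 end.
Proof.
case: o => [|c' o'] /=; first by rewrite big_pred0.
case: eqP => [<-|ne]; first by apply: eq_bigl => r; rewrite eqseq_cons eqxx.
by rewrite big_pred0 // => r; rewrite eqseq_cons; case: eqP.
Qed.

Lemma GE s y ys o : G s (y :: ys) o =
  \sum_(b <- measure R s y) b.1 *
    match o with [::] => 0 | c' :: o' => if b.2.1 == c' then G b.2.2 ys o' else 0 end.
Proof.
rewrite /G (run_cons_sum _ _ _ (fun u => u == o)); apply: eq_bigr => b _.
by rewrite (sum_cons_eq _ id).
Qed.

Definition M (v w : hval) : seq (R * (bool * hval)) :=
  flatten [seq [seq (p.1 * q.1, (p.2, q.2)) | q <- partner_dist R w] | p <- outcome_dist R v].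

Lemma MS s x : ~~ is_blank s -> measure R s x =
  [seq (b.1, (b.2.1, upd (upd s x (actual b.2.1)) (partner x) b.2.2)) | b <- M (s x) (s (partner x))].
Proof.
move=> nb; rewrite /measure (negbTE nb) /M map_flatten -map_comp.
congr flatten; apply: eq_map => p /=; rewrite -map_comp; by apply: eq_map.
Qed.

Lemma Msum v w : \sum_(b <- M v w) b.1 = 1.
Proof. by case: v; case: w; rewrite /M /= ?big_cons ?big_nil /=; field. Qed.

Definition isfst (y : obs) : bool := match y with A1 | B1 => true | _ => false end.

Fixpoint H (v w : hval) (ys : seq obs) (o : seq bool) : R :=
  match ys, o with
  | [::], [::] => 1
  | [::], _ => 0
  | _ :: _, [::] => 0
  | y :: ys', c :: o' =>
    if isfst y then
      \sum_(b <- M v w) b.1 * (if b.2.1 == c then H (actual b.2.1) b.2.2 ys' o' else 0)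
    else
      \sum_(b <- M w v) b.1 * (if b.2.1 == c then H b.2.2 (actual b.2.1) ys' o' else 0)
  end.

Definition pf P := match P with Alice => A1 | Bob => B1 end.
Definition ps P := match P with Alice => A2 | Bob => B2 end.

Lemma nb_post s x c q : ~~ is_blank (upd (upd s x (actual c)) (partner x) q).
Proof. by case: x; case: c; rewrite /is_blank /upd /= ?andbF. Qed.

Lemma GH P s ys o : ~~ is_blank s -> all (fun y => party_eqb (owner y) P) ys ->
  G s ys o = H (s (pf P)) (s (ps P)) ys o.
Proof.
elim: ys s o => [|y ys IH] s o nb.
  by move=> _; rewrite /G /= big_cons big_nil; case: o => //=; rewrite addr0.
move=> /andP [Hy Hys]; rewrite GE; case: o => [|c o'].
  by rewrite /= big1 // => b _; rewrite mulr0.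
rewrite (MS _ y nb) big_map.
case: P Hy Hys IH; case: y => // _ Hys IH /=;
  apply: eq_bigr => b _ /=; case: (b.2.1 == c) => //; rewrite IH ?nb_post //.
Qed.

Lemma HL ys : forall o v w,
  H v Und ys o = 2^-1 * H v PotP ys o + 2^-1 * H v PotM ys o /\
  H Und w ys o = 2^-1 * H PotP w ys o + 2^-1 * H PotM w ys o.
Proof.
elim: ys => [|y ys IH] o v w.
  by case: o => [|c o] /=; split; field.
case: o => [|c o]; first by rewrite /=; split; field.
split; [case: y; case: v; case: c | case: y; case: w; case: c];
  rewrite /= /M /= ?big_cons ?big_nil /=;
  rewrite ?(proj1 (IH _ _ Und)) ?(proj2 (IH _ Und _)); field; done.
Qed.

Lemma nb_bp x c : ~~ is_blank (blank_post x c).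
Proof. by case: x; case: c. Qed.

Lemma K P x s ys o : ~~ party_eqb (owner x) P -> all (fun y => party_eqb (owner y) P) ys ->
  \sum_(b <- measure R s x) b.1 * G b.2.2 ys o = G s ys o.
Proof.
move=> nx Hys; case nbs: (is_blank s).
  have Hs : forall z, s z = Und.
    by move: nbs => /and4P [h1 h2 h3 h4] [];
      [move: h1 | move: h2 | move: h3 | move: h4]; case: (s _).
  rewrite /measure nbs !big_cons big_nil /= addr0.
  rewrite (GH P (blank_post x false)) ?nb_bp // (GH P (blank_post x true)) ?nb_bp //.
  case: ys Hys => [|y ys'] Hys.
    rewrite /G /= big_cons big_nil /=.
    by case: o => [|c o] /=; field.
  move: Hys => /andP [Hy Hys']. rewrite GE /measure nbs !big_cons big_nil /=.
  case: o => [|c o']; first by rewrite /=; field.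
  rewrite (GH P (blank_post y false)) ?nb_bp // (GH P (blank_post y true)) ?nb_bp //.
  by case: P nx Hy Hys' => nx Hy Hys'; case: x nx => // _; case: y Hy => // _;
    case: c; rewrite /M /= ?big_cons ?big_nil /=;
    rewrite ?(proj1 (HL _ _ _ Und)) ?(proj2 (HL _ _ Und _)); field.
have nb : ~~ is_blank s by rewrite nbs.
rewrite (MS _ x nb) big_map (GH P s ys o nb Hys).
have E : forall c q, upd (upd s x (actual c)) (partner x) q (pf P) = s (pf P) /\
                    upd (upd s x (actual c)) (partner x) q (ps P) = s (ps P).
  by move=> c q; move: nx; clear; case: P; case: x.
transitivity (\sum_(b <- M (s x) (s (partner x))) b.1 * H (s (pf P)) (s (ps P)) ys o).
  apply: eq_bigr => b _ /=; rewrite (GH P) ?nb_post //.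
  by case: (E b.2.1 b.2.2) => -> ->.
by rewrite -big_distrl /= Msum mul1r.
Qed.

Definition F P s xs o : R := \sum_(r <- run R s xs | select P xs r.2.1 == o) r.1.

Lemma select_cons P x xs c u : select P (x::xs) (c::u) =
  if party_eqb (owner x) P then c :: select P xs u else select P xs u.
Proof. by rewrite /select /=; case: party_eqb. Qed.

Lemma FG P xs : forall s o, F P s xs o = G s [seq x <- xs | party_eqb (owner x) P] o.
Proof.
elim: xs => [|x xs IH] s o; first by rewrite /F /G !big_cons !big_nil.
rewrite /F (run_cons_sum _ _ _ (fun u => select P (x::xs) u == o)).
case hx: (party_eqb (owner x) P).
  rewrite /= hx /G (run_cons_sum _ _ _ (fun u => u == o)); apply: eq_bigr => b _.
  congr (_ * _).
  under eq_bigl => r do rewrite select_cons hx.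
  rewrite (sum_cons_eq _ (select P xs)) (sum_cons_eq _ id).
  case: o => // c o'; case: (_ == _) => //; exact: IH.
rewrite /= hx -(K P x s); last by apply: filter_all.
  apply: eq_bigr => b _; congr (_ * _).
  under eq_bigl => r do rewrite select_cons hx.
  exact: IH.
by rewrite hx.
Qed.

Lemma margE mu xs P o : marg_prob mu xs P o = \sum_(w <- mu) w.1 * F P w.2 xs o.
Proof.
rewrite /marg_prob /run_mixed big_flatten /= big_map; apply: eq_bigr => w _.
by rewrite big_map mulr_sumr.
Qed.

Lemma jointE mu ys o : joint_prob mu ys o = \sum_(w <- mu) w.1 * G w.2 ys o.
Proof.
rewrite /joint_prob /run_mixed big_flatten /= big_map; apply: eq_bigr => w _.
by rewrite big_map mulr_sumr.
Qed.
End S.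

Theorem mainTheorem4 (R : realFieldType) (mu : seq (R * pstate))
    (Hmu : is_mixed_state mu) (P : party) (ys : seq obs)
    (Hys : all (fun y => party_eqb (owner y) P) ys)
    (xs : seq obs)
    (Hxs : [seq x <- xs | party_eqb (owner x) P] = ys)
    (o : seq bool) :
  marg_prob mu xs P o = joint_prob mu ys o.
Proof.
rewrite margE jointE; apply: eq_bigr => w _.
by rewrite FG Hxs.
Qed.
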